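(* Let $G=\langle x\rangle$ be a finite cyclic group with $o(x)\geq 2$, and let $m\geq 3$ be an integer. Then $G$ admits an $m$-PDR of valency $3$ if and only if it is not the case that $o(x)=2$ and $m=3$.
   Context: For a group $G$ and an integer $m\geq 2$, write $g_i$ for the element $(g,i)$ of $G\times\mathbb{Z}_m$. Given subsets $T_{i,j}\subseteq G$ for $i,j\in\mathbb{Z}_m$, the $m$-Cayley digraph $\mathrm{Cay}(G,T_{i,j}:i,j\in\mathbb{Z}_m)$ is the digraph with vertex set $G\times\mathbb{Z}_m$ and arc set $\bigcup_{i,j\in\mathbb{Z}_m}\{(g_i,(tg)_j): t\in T_{i,j},\, g\in G\}$. It is called an $m$-partite Cayley digraph if $T_{i,i}=\emptyset$ for all $i\in\mathbb{Z}_m$. A digraph is regular of valency $k$ if every vertex has out-valency $k$ and in-valency $k$. A group $G$ admits an $m$-PDR of valency $k$ if there exists an $m$-partite Cayley digraph $\Gamma$ over $G$ which is regular of valency $k$ and whose full automorphism group $\mathrm{Aut}(\Gamma)$ is isomorphic to $G$. $o(x)$ denotes the order of $x$. *)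

(* Defs.v *)
From HB Require Import structures.
From mathcomp Require Import all_boot all_fingroup all_solvable.
Set Implicit Arguments. Unset Strict Implicit. Unset Printing Implicit Defensive.
Local Open Scope group_scope.

(* m-Cayley digraph Cay(G, T_{i,j}) on vertex set G x Z_m (Z_m = 'I_m):
   arc (g_i, h_j) iff h = t g for some t in T_{i,j}, i.e. h * g^-1 \in T i j. *)
Definition mcay_arc (gT : finGroupType) (m : nat)
  (T : 'I_m -> 'I_m -> {set gT}) (u v : gT * 'I_m) : bool :=
  v.1 * (u.1)^-1 \in T u.2 v.2.

Definition mpartite (gT : finGroupType) (m : nat)
  (T : 'I_m -> 'I_m -> {set gT}) : Prop := forall i, T i i = set0.

Definition dig_regular (V : finType) (arc : rel V) (k : nat) : Prop :=
  forall u : V, #|[set v | arc u v]| = k /\ #|[set v | arc v u]| = k.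

Definition dig_aut (V : finType) (arc : rel V) : {set {perm V}} :=
  [set p : {perm V} | [forall u, forall v, arc (p u) (p v) == arc u v]].

Definition admits_mPDR (gT : finGroupType) (m k : nat) : Prop :=
  exists T : 'I_m -> 'I_m -> {set gT},
    [/\ mpartite T, dig_regular (mcay_arc T) k &
        dig_aut (mcay_arc T) \isog [set: gT]].

(* Main.v *)
From HB Require Import structures.
Require Import Defs.
From mathcomp Require Import all_boot all_fingroup all_solvable.
From mathcomp Require Import zify.
Set Implicit Arguments. Unset Strict Implicit. Unset Printing Implicit Defensive.

Section General.
Variables (gT : finGroupType) (m : nat).
Local Open Scope group_scope.
Implicit Types (T : 'I_m -> 'I_m -> {set gT}).

Definition trf (a : gT) (v : gT * 'I_m) := (v.1 * a, v.2).
Lemma trf_inj a : injective (trf a).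
Proof. by move=> [g i] [h j] [/mulIg -> ->]. Qed.
Definition tr a : {perm gT * 'I_m} := perm (@trf_inj a).

Lemma trE a v : tr a v = (v.1 * a, v.2).
Proof. by rewrite permE. Qed.

Lemma tr_aut T a : tr a \in dig_aut (mcay_arc T).
Proof.
rewrite inE; apply/forallP=> u; apply/forallP=> v; rewrite !trE /mcay_arc /=.
by rewrite invMg mulgA mulgK.
Qed.

Lemma trM : {morph tr : a b / a * b}.
Proof. by move=> a b; apply/permP=> v; rewrite permM !trE /= mulgA. Qed.

Lemma out_card T g i : #|[set v | mcay_arc T (g, i) v]| =
   #|[set p : 'I_m * gT | p.2 \in T i p.1]|.
Proof.
have inj : injective (fun p : 'I_m * gT => (p.2 * g, p.1)).
  by move=> [j t] [k s] [/mulIg -> ->].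
rewrite -(card_imset _ inj); apply: eq_card => v; rewrite inE.
apply/idP/imsetP => [H | [p Hp ->]].
  exists (v.2, v.1 * g^-1); first by rewrite inE.
  by rewrite /= mulgKV; case: v {H}.
by rewrite /mcay_arc /= mulgK; rewrite inE in Hp.
Qed.

Lemma in_card T g j : #|[set v | mcay_arc T v (g, j)]| =
   #|[set p : 'I_m * gT | p.2 \in T p.1 j]|.
Proof.
have inj : injective (fun p : 'I_m * gT => (p.2^-1 * g, p.1)).
  by move=> [i t] [k s] [/mulIg /invg_inj -> ->].
rewrite -(card_imset _ inj); apply: eq_card => v; rewrite inE.
apply/idP/imsetP => [H | [p Hp ->]].
  exists (v.2, g * v.1^-1); first by rewrite inE.
  by rewrite /= invMg invgK mulgKV; case: v {H}.
by rewrite /mcay_arc /= invMg invgK mulgA mulgV mul1g; rewrite inE in Hp.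
Qed.

Lemma card_pairs_sum (A : 'I_m -> {set gT}) :
  #|[set p : 'I_m * gT | p.2 \in A p.1]| = \sum_j #|A j|.
Proof.
rewrite -sum1_card.
under [RHS]eq_bigr do rewrite -sum1_card.
rewrite pair_big_dep /=; apply: eq_bigl => p; by rewrite inE.
Qed.

End General.

Lemma card_list (m N : nat) (Q : 'I_m * 'I_N -> bool) (s : seq (nat * nat)) :
  uniq s -> all (fun e => (e.1 < m) && (e.2 < N)) s ->
  (forall q : 'I_m * 'I_N, Q q = ((val q.1, val q.2) \in s)) ->
  #|[set q | Q q]| = size s.
Proof.
move=> us als HQ.
set f := fun q : 'I_m * 'I_N => (val q.1, val q.2).
have finj : injective f.
  by move=> [a b] [c d] [/val_inj -> /val_inj ->].
rewrite cardE -(size_map f); apply/perm_size/uniq_perm => //.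
  by rewrite (map_inj_uniq finj) enum_uniq.
move=> e; apply/mapP/idP => [[q]|es].
  by rewrite mem_enum inE HQ => qs ->.
move/allP: als => /(_ e es) /andP [e1 e2].
exists (Ordinal e1, Ordinal e2); first by rewrite mem_enum inE HQ /=; case: e es {e1 e2}.
by case: e es e1 e2.
Qed.

Definition Pn (m i j k : nat) : bool :=
 ((i.+1 == j) || (j.+1 == i)) && (k == 0)
 || (2 <= i) && (i <= m-2) && (j == i.+1) && (k == 1)
 || (i == 1) && (j == 0) && (k == 1)
 || (i == 0) && (j == 2) && (k == 0)
 || (i == m-1) && (j == 1) && (k == 1)
 || (i == 0) && (j == m-1) && (k == (m == 3))
 || (i == m-1) && (j == 0) && (k == 1).

Ltac solve_id k hk := move: hk; case: k => [|[|k]] hk /=; rewrite ?andbT ?andbF ?orbF ?orbT /=;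
  case: eqP => ? /=; rewrite ?andbT ?andbF ?orbF ?orbT /=; lia.

Lemma Pn_dig m n i j k : 3 <= m -> 2 <= n -> (m = 3 -> 3 <= n) -> i < m -> j < m -> k < n ->
  Pn m i j k && Pn m j i ((n - k) %% n) = (k == 0) && ((j == i.+1) || (i == j.+1)).
Proof.
move=> h1 h2 h3 *. have h3' : (m == 3) ==> (3 <= n) by apply/implyP=> /eqP/h3.
have [->|k0] := eqVneq k 0. by rewrite subn0 modnn /Pn; lia.
rewrite modn_small; last by lia. rewrite /Pn. lia.
Qed.

Lemma Pn_out m n i : 3 <= m -> 2 <= n -> (m = 3 -> 3 <= n) -> i < m ->
  #|[set q : 'I_m * 'I_n | Pn m i q.1 q.2]| = 3.
Proof.
move=> h1 h2 h3 hi. have h3' : (m == 3) ==> (3 <= n) by apply/implyP=> /eqP/h3.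
have [i0|i0] := eqVneq i 0.
  apply: (card_list (s := [:: (1,0); (2,0); (m-1, nat_of_bool (m == 3))])).
  - rewrite /= ?inE ?xpair_eqE; lia.
  - rewrite /=; lia.
  - move=> [[j hj] [k hk]]; rewrite /= !inE !xpair_eqE /Pn; solve_id k hk.
have [i1|i1] := eqVneq i 1.
  apply: (card_list (s := [:: (0,0); (0,1); (2,0)])).
  - rewrite /= ?inE ?xpair_eqE; lia.
  - rewrite /=; lia.
  - move=> [[j hj] [k hk]]; rewrite /= !inE !xpair_eqE /Pn; solve_id k hk.
have [il|il] := eqVneq i (m-1).
  apply: (card_list (s := [:: (m-2,0); (1,1); (0,1)])).
  - rewrite /= ?inE ?xpair_eqE; lia.
  - rewrite /=; lia.
  - move=> [[j hj] [k hk]]; rewrite /= !inE !xpair_eqE /Pn; solve_id k hk.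
apply: (card_list (s := [:: (i-1,0); (i+1,0); (i+1,1)])).
- rewrite /= ?inE ?xpair_eqE; lia.
- rewrite /=; lia.
- move=> [[j hj] [k hk]]; rewrite /= !inE !xpair_eqE /Pn; solve_id k hk.
Qed.

Lemma Pn_in m n j : 3 <= m -> 2 <= n -> (m = 3 -> 3 <= n) -> j < m ->
  #|[set q : 'I_m * 'I_n | Pn m q.1 j q.2]| = 3.
Proof.
move=> h1 h2 h3 hj. have h3' : (m == 3) ==> (3 <= n) by apply/implyP=> /eqP/h3.
have [j0|j0] := eqVneq j 0.
  apply: (card_list (s := [:: (1,0); (1,1); (m-1,1)])).
  - rewrite /= ?inE ?xpair_eqE; lia.
  - rewrite /=; lia.
  - move=> [[i hi] [k hk]]; rewrite /= !inE !xpair_eqE /Pn; solve_id k hk.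
have [j1|j1] := eqVneq j 1.
  apply: (card_list (s := [:: (0,0); (2,0); (m-1,1)])).
  - rewrite /= ?inE ?xpair_eqE; lia.
  - rewrite /=; lia.
  - move=> [[i hi] [k hk]]; rewrite /= !inE !xpair_eqE /Pn; solve_id k hk.
have [m3|m3] := eqVneq m 3.
  apply: (card_list (s := [:: (1,0); (0,0); (0,1)])).
  - rewrite /= ?inE ?xpair_eqE; lia.
  - rewrite /=; lia.
  - move=> [[i hi] [k hk]]; rewrite /= !inE !xpair_eqE /Pn; solve_id k hk.
have [j2|j2] := eqVneq j 2.
  apply: (card_list (s := [:: (1,0); (3,0); (0,0)])).
  - rewrite /= ?inE ?xpair_eqE; lia.
  - rewrite /=; lia.
  - move=> [[i hi] [k hk]]; rewrite /= !inE !xpair_eqE /Pn; solve_id k hk.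
have [jl|jl] := eqVneq j (m-1).
  apply: (card_list (s := [:: (m-2,0); (m-2,1); (0,0)])).
  - rewrite /= ?inE ?xpair_eqE; lia.
  - rewrite /=; lia.
  - move=> [[i hi] [k hk]]; rewrite /= !inE !xpair_eqE /Pn; solve_id k hk.
apply: (card_list (s := [:: (j-1,0); (j-1,1); (j+1,0)])).
- rewrite /= ?inE ?xpair_eqE; lia.
- rewrite /=; lia.
- move=> [[i hi] [k hk]]; rewrite /= !inE !xpair_eqE /Pn; solve_id k hk.
Qed.

Section Construction.
Local Open Scope group_scope.
Variables (gT : finGroupType) (x : gT) (m : nat).
Hypothesis gen : <[x]> = [set: gT].
Hypotheses (n2 : 1 < #[x]) (m3 : 2 < m) (m3n : m = 3 -> 2 < #[x]).

Definition expo (g : gT) : nat := odflt 0%N (omap val [pick k : 'I_#[x] | x ^+ k == g]).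

Lemma expo_spec g : (expo g < #[x])%N /\ x ^+ expo g = g.
Proof.
rewrite /expo; case: pickP => [k /eqP <-|H] /=; first by split.
have : g \in <[x]> by rewrite gen inE.
case/cycleP=> i gi.
have := H (Ordinal (ltn_pmod i (order_gt0 x))); rewrite /= expg_mod_order gi eqxx //.
Qed.

Lemma expo_lt g : (expo g < #[x])%N. Proof. by case: (expo_spec g). Qed.
Lemma expoK g : x ^+ expo g = g. Proof. by case: (expo_spec g). Qed.

Lemma expo_exp k : (k < #[x])%N -> expo (x ^+ k) = k.
Proof.
move=> hk; have := expoK (x ^+ k); move/eqP; rewrite eq_expg_mod_order.
by rewrite !modn_small ?expo_lt // => /eqP.
Qed.

Lemma expo1 : expo 1 = 0%N.
Proof. by rewrite -(expg0 x) expo_exp ?order_gt0. Qed.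

Lemma expox : expo x = 1%N.
Proof. by rewrite -{1}(expg1 x) expo_exp. Qed.

Lemma expo_eq0 g : (expo g == 0%N) = (g == 1).
Proof.
apply/eqP/eqP => [H|->]; last exact: expo1.
by rewrite -(expoK g) H expg0.
Qed.

Lemma expoV g : expo g^-1 = ((#[x] - expo g) %% #[x])%N.
Proof.
have -> : g^-1 = x ^+ ((#[x] - expo g) %% #[x]).
  rewrite expg_mod_order; apply: (@mulIg _ g); rewrite mulVg -{2}(expoK g) -expgD.
  by rewrite subnK ?expg_order // ltnW ?expo_lt.
by rewrite expo_exp // ltn_pmod ?order_gt0.
Qed.

Definition Tc (i j : 'I_m) : {set gT} := [set t | Pn m i j (expo t)].
Local Notation arcT := (mcay_arc Tc).

Lemma arcTE g h (i j : 'I_m) : arcT (g, i) (h, j) = Pn m i j (expo (h * g^-1)).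
Proof. by rewrite /mcay_arc /Tc inE. Qed.

Lemma digonE g h (i j : 'I_m) :
  arcT (g, i) (h, j) && arcT (h, j) (g, i) =
  (h == g) && ((nat_of_ord j == (nat_of_ord i).+1) || (nat_of_ord i == (nat_of_ord j).+1)).
Proof.
rewrite !arcTE.
have -> : g * h^-1 = (h * g^-1)^-1 by rewrite invMg invgK.
rewrite expoV Pn_dig ?expo_lt ?ltn_ord //; try exact: m3n.
by rewrite expo_eq0 -eq_mulgV1.
Qed.

Lemma Tc_partite : mpartite Tc.
Proof.
move=> i; apply/setP=> t; rewrite /Tc !inE /Pn.
have := ltn_ord i; lia.
Qed.

Lemma transfer (R : 'I_m -> nat -> bool) :
  #|[set p : 'I_m * gT | R p.1 (expo p.2)]| = #|[set q : 'I_m * 'I_#[x] | R q.1 q.2]|.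
Proof.
have inj : injective (fun q : 'I_m * 'I_#[x] => (q.1, x ^+ q.2)).
  move=> [i a] [j b] [-> /(congr1 expo)]; rewrite !expo_exp // => /val_inj -> //.
rewrite -(card_imset _ inj); apply: eq_card => [[j t]]; rewrite inE /=.
apply/idP/imsetP => [H|[[k b] Hb [-> ->]]].
  exists (j, Ordinal (expo_lt t)); first by rewrite inE.
  by rewrite /= expoK.
by rewrite expo_exp //; rewrite inE in Hb.
Qed.

Lemma Tc_regular : dig_regular arcT 3.
Proof.
move=> [g i]; rewrite out_card in_card.
have h3 : m = 3 -> 3 <= #[x] by move/m3n.
split.
  rewrite (@eq_card _ _ [set p : 'I_m * gT | Pn m i p.1 (expo p.2)]); last by move=> p; rewrite !inE.
  have E := transfer (fun j k => Pn m i j k); rewrite /= in E; rewrite E.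
  by apply: Pn_out.
rewrite (@eq_card _ _ [set p : 'I_m * gT | Pn m p.1 i (expo p.2)]); last by move=> p; rewrite !inE.
have E := transfer (fun j k => Pn m j i k); rewrite /= in E; rewrite E.
by apply: Pn_in.
Qed.


Definition om0 : 'I_m := Ordinal (leq_trans (isT : 0 < 3)%N m3).
Definition lay k : 'I_m := insubd om0 k.
Lemma val_lay k : (k < m)%N -> nat_of_ord (lay k) = k.
Proof. by move=> h; rewrite val_insubd h. Qed.

Definition dg u v := arcT u v && arcT v u.

Lemma aut_arc p : p \in dig_aut arcT -> forall u v, arcT (p u) (p v) = arcT u v.
Proof. by rewrite inE => /forallP H u v; move/forallP: (H u) => /(_ v) /eqP. Qed.

Lemma aut_dg p : p \in dig_aut arcT -> forall u v, dg (p u) (p v) = dg u v.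
Proof. by move=> hp u v; rewrite /dg !(aut_arc hp). Qed.

Definition isEnd u := forall v w, dg u v -> dg u w -> v = w.

Lemma isEnd_aut p : p \in dig_aut arcT -> forall u, isEnd u -> isEnd (p u).
Proof.
move=> hp u E v w; rewrite -[v](permKV p) -[w](permKV p) !(aut_dg hp).
by move=> /E H /H ->.
Qed.

Definition hasQ u := exists w v, [/\ dg u w, dg w v, v != u & arcT u v].

Lemma hasQ_aut p : p \in dig_aut arcT -> forall u, hasQ u -> hasQ (p u).
Proof.
move=> hp u [w [v [h1 h2 h3 h4]]]; exists (p w), (p v).
by rewrite !(aut_dg hp) (aut_arc hp) (inj_eq (@perm_inj _ p)).
Qed.

Lemma End_layer h (i : 'I_m) : isEnd (h, i) -> nat_of_ord i = 0%N \/ nat_of_ord i = m.-1.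
Proof.
move=> E; have hi : (nat_of_ord i < m)%N := ltn_ord i.
have [i0|i0] := eqVneq (nat_of_ord i) 0%N; first by left.
have [il|il] := eqVneq (nat_of_ord i) m.-1; first by right.
have hs : ((nat_of_ord i).+1 < m)%N by lia.
have := E (h, lay (nat_of_ord i).-1) (h, lay (nat_of_ord i).+1).
rewrite /dg !digonE !val_lay ?eqxx /=; try lia.
have H1 : (nat_of_ord i == ((nat_of_ord i).-1).+1) by lia.
rewrite H1 orbT => /(_ isT isT) [] /(congr1 (@nat_of_ord m)); rewrite !val_lay; try lia.
Qed.

Lemma notQ_last h (i : 'I_m) : nat_of_ord i = m.-1 -> ~ hasQ (h, i).
Proof.
move=> il [[h1 j1] [[h2 j2] [d1 d2 ne a]]].
rewrite /dg digonE in d1; move/andP: d1 => [/eqP e1 c1]; subst h1.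
rewrite /dg digonE in d2; move/andP: d2 => [/eqP e2 c2]; subst h2.
rewrite xpair_eqE eqxx /= -val_eqE /= in ne.
rewrite arcTE mulgV expo1 /Pn in a.
have := ltn_ord j1; have := ltn_ord j2; have := ltn_ord i. lia.
Qed.

Lemma End0 g : isEnd (g, lay 0).
Proof.
move=> [h1 j1] [h2 j2]; rewrite /dg !digonE val_lay ?(leq_trans _ m3) //.
move=> /andP[/eqP -> c1] /andP[/eqP -> c2]; congr pair; apply/val_inj => /=; lia.
Qed.

Lemma Q0 g : hasQ (g, lay 0).
Proof.
have h0 : (0 < m)%N by lia.
have h1 : (1 < m)%N by lia.
exists (g, lay 1), (g, lay 2); split.
- by rewrite /dg digonE eqxx !val_lay.
- by rewrite /dg digonE eqxx !val_lay.
- by rewrite xpair_eqE -val_eqE /= !val_lay // andbF.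
- by rewrite arcTE mulgV expo1 !val_lay // /Pn; lia.
Qed.

Lemma layer0 p : p \in dig_aut arcT -> forall g, nat_of_ord (p (g, lay 0)).2 = 0%N.
Proof.
move=> hp g; have E := @isEnd_aut p hp _ (@End0 g); have Q := @hasQ_aut p hp _ (Q0 g).
move: E Q; case: (p (g, lay 0)) => h i E Q.
case: (End_layer E) => // il; exfalso; exact: notQ_last il Q.
Qed.

Lemma layer_all p : p \in dig_aut arcT ->
  forall k, (k < m)%N -> forall g, p (g, lay k) = ((p (g, lay 0)).1, lay k).
Proof.
move=> hp.
have h0 : (0 < m)%N by lia.
have step0 g : p (g, lay 0) = ((p (g, lay 0)).1, lay 0).
  have := layer0 hp g; case: (p (g, lay 0)) => h i /= ei; congr pair.
  by apply/val_inj => /=; rewrite val_lay.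
suff H : forall k, ((k < m)%N -> forall g, p (g, lay k) = ((p (g, lay 0)).1, lay k)) /\
                 ((k.+1 < m)%N -> forall g, p (g, lay k.+1) = ((p (g, lay 0)).1, lay k.+1)).
  by move=> k; case: (H k).
elim=> [|k [IH1 IH2]].
  split=> // h1 g.
  have e0 := step0 g; set f := (p (g, lay 0)).1 in e0 *.
  have := aut_dg hp (g, lay 0) (g, lay 1).
  rewrite {2}/dg digonE eqxx !val_lay // e0 /=.
  case: (p (g, lay 1)) => h j; rewrite /dg digonE val_lay //.
  move=> /andP [/eqP -> c]; congr pair; apply/val_inj => /=; rewrite val_lay //; lia.
split=> // hk g.
have hk1 : (k.+1 < m)%N by lia.
have hk0 : (k < m)%N by lia.
have e1 := IH2 (ltnW hk) g; have e0 := IH1 (ltnW (ltnW hk)) g.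
set f := (p (g, lay 0)).1 in e0 e1 *.
have hne : p (g, lay k.+2) != p (g, lay k).
  rewrite (inj_eq (@perm_inj _ p)) xpair_eqE -val_eqE /= !val_lay ?eqxx //=; lia.
rewrite e0 in hne.
have := aut_dg hp (g, lay k.+1) (g, lay k.+2).
rewrite {2}/dg digonE eqxx !val_lay // e1 eqxx /=.
move: hne; case: (p (g, lay k.+2)) => h j.
rewrite /dg digonE val_lay //.
move=> ne /andP [/eqP eh c]; subst h.
rewrite xpair_eqE eqxx -val_eqE /= val_lay /= in ne; last lia.
congr pair; apply/val_inj => /=; rewrite val_lay //; lia.
Qed.

Lemma aut_is_tr p : p \in dig_aut arcT -> p = @tr gT m (p (1, lay 0)).1.
Proof.
move=> hp.
set f := fun g => (p (g, lay 0)).1.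
have pf v : p v = (f v.1, v.2).
  case: v => g i; have -> : i = lay (nat_of_ord i) by apply/val_inj => /=; rewrite val_lay.
  by rewrite (layer_all hp) ?val_lay.
have hm1 : (m.-1 < m)%N by lia.
have h1 : (1 < m)%N by lia.
have fx g : f (x * g) = x * f g.
  have a1 : arcT (g, lay m.-1) (x * g, lay 1).
    by rewrite arcTE mulgK expox !val_lay // /Pn; lia.
  rewrite -(aut_arc hp) !pf /= arcTE in a1.
  have [e0|e1] : expo (f (x * g) * (f g)^-1) = 0%N \/ expo (f (x * g) * (f g)^-1) = 1%N.
    have : Pn m m.-1 1 (expo (f (x * g) * (f g)^-1)) by move: a1; rewrite !val_lay.
    rewrite /Pn; lia.
    move/eqP: e0; rewrite expo_eq0 -eq_mulgV1 => /eqP efg.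
    have : p (x * g, lay 0) = p (g, lay 0) by rewrite !pf /= efg.
    move/perm_inj => [] /(congr1 (fun y => y * g^-1)); rewrite mulgK mulgV => x1.
    by move: n2; rewrite x1 order1.
  have := expoK (f (x * g) * (f g)^-1); rewrite e1 expg1 => H.
  by rewrite {2}H mulgKV.
have fpow k : f (x ^+ k) = x ^+ k * f 1.
  elim: k => [|k IH]; first by rewrite expg0 mul1g.
  by rewrite expgS fx IH mulgA.
have fall g : f g = g * f 1 by rewrite -(expoK g) fpow.
by apply/permP => [[g i]]; rewrite trE pf /= fall.
Qed.

Lemma Tc_aut_isog : dig_aut arcT \isog [set: gT].
Proof.
have trMin : {in [set: gT] &, {morph (@tr gT m) : a b / a * b}}.
  by move=> a b _ _; exact: trM.
pose trm := Morphism trMin.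
have Heq : dig_aut arcT = trm @* [set: gT].
  apply/eqP; rewrite eqEsubset; apply/andP; split.
    apply/subsetP => p hp; rewrite (aut_is_tr hp).
    by apply: (mem_morphim trm); rewrite inE.
  apply/subsetP => _ /morphimP [a _ _ ->]; exact: tr_aut.
rewrite Heq isog_sym; apply: sub_isog => //.
apply/injmP => a b _ _ H.
have := congr1 (fun q : {perm gT * 'I_m} => q (1, om0)) H.
by rewrite /= !trE /= !mul1g => -[].
Qed.

Lemma Tc_admits : admits_mPDR gT m 3.
Proof. exists Tc; split; [exact: Tc_partite | exact: Tc_regular | exact: Tc_aut_isog]. Qed.

End Construction.

Local Open Scope group_scope.

Lemma daut_group (V : finType) (arc : rel V) : group_set (dig_aut arc).
Proof.
apply/group_setP; split.
  by rewrite inE; apply/forallP=> u; apply/forallP=> v; rewrite !perm1.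
move=> a b; rewrite !inE => /forallP ha /forallP hb.
apply/forallP=> u; apply/forallP=> v; rewrite !permM.
move/forallP: (hb (a u)) => /(_ (a v)) /eqP ->.
by move/forallP: (ha u) => /(_ v).
Qed.

Definition o0 : 'I_3 := Ordinal (isT : (0 < 3)%N).
Definition o1 : 'I_3 := Ordinal (isT : (1 < 3)%N).
Definition o2 : 'I_3 := Ordinal (isT : (2 < 3)%N).

Lemma sum3 (F : 'I_3 -> nat) : (\sum_j F j = F o0 + F o1 + F o2)%N.
Proof.
rewrite !big_ord_recl big_ord0 addn0 addnA.
by congr (F _ + F _ + F _)%N; apply: val_inj.
Qed.

Lemma ord3P (i : 'I_3) : [\/ i = o0, i = o1 | i = o2].
Proof.
case: i => [[|[|[|k]]] hk]; [constructor 1|constructor 2|constructor 3|by []];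
  by apply: val_inj.
Qed.

Lemma ordS0 : ordS o0 = o1. Proof. by apply: val_inj. Qed.
Lemma ordS1 : ordS o1 = o2. Proof. by apply: val_inj. Qed.
Lemma ordS2 : ordS o2 = o0. Proof. by apply: val_inj. Qed.

Section Rot.
Variables (gT : finGroupType) (T : 'I_3 -> 'I_3 -> {set gT}) (d : 'I_3 -> gT).
Hypothesis comm : forall a b : gT, a * b = b * a.
Hypothesis HT : forall i j t,
  (t \in T i j) = (t * (d j * (d i)^-1) \in T (ordS i) (ordS j)).

Definition rotf (v : gT * 'I_3) := (v.1 * d v.2, ordS v.2).
Lemma rotf_inj : injective rotf.
Proof.
move=> [g i] [h j] E.
have e3 : i = j := ordS_inj (congr1 snd E).
subst j; by move: (congr1 fst E) => /= /mulIg ->.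
Qed.
Definition rotp : {perm gT * 'I_3} := perm rotf_inj.

Lemma rotp_aut : rotp \in dig_aut (mcay_arc T).
Proof.
rewrite inE; apply/forallP=> [[g i]]; apply/forallP=> [[h j]].
rewrite !permE /rotf /mcay_arc /=; apply/eqP; rewrite [RHS]HT.
have -> // : h * d j * (g * d i)^-1 = h * g^-1 * (d j * (d i)^-1).
rewrite invMg -!mulgA; congr (h * _).
by rewrite mulgA comm.
Qed.

Lemma rotp_layer : (rotp (1, o0)).2 = o1.
Proof. by rewrite permE /rotf /= ordS0. Qed.
End Rot.

Local Open Scope group_scope.

Lemma single_shift (gT : finGroupType) (c c' u t : gT) :
  c' = c * u -> (t \in [set c]) = (t * u \in [set c']).
Proof. by move->; rewrite !inE (inj_eq (mulIg u)). Qed.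

Lemma full2 (gT : finGroupType) (A : {set gT}) : #|gT| = 2 -> #|A| = 2 -> A = setT.
Proof. by move=> cT cA; apply/eqP; rewrite eqEcard subsetT cardsT cT cA. Qed.

Lemma no_pdr (gT : finGroupType) : cyclic [set: gT] -> #|[set: gT]| = 2 -> ~ admits_mPDR gT 3 3.
Proof.
move=> cyc c2 [T [part reg iso]].
have comm : forall a b : gT, a * b = b * a.
  move=> a b; move/centsP: (cyclic_abelian cyc) => H.
  exact: (H a (in_setT a) b (in_setT b)).
have cT : #|gT| = 2 by rewrite -cardsT.
have cardA : #|dig_aut (mcay_arc T)| = 2.
  have := @card_isog _ _ (Group (daut_group (mcay_arc T))) [set: gT]%G iso.
  by rewrite /= c2.
have row i : (#|T i o0| + #|T i o1| + #|T i o2| = 3)%N.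
  by have := (reg (1, i)).1; rewrite out_card card_pairs_sum sum3.
have col j : (#|T o0 j| + #|T o1 j| + #|T o2 j| = 3)%N.
  by have := (reg (1, j)).2; rewrite in_card (card_pairs_sum (fun i => T i j)) sum3.
have bnd i j : (#|T i j| <= 2)%N by rewrite -cT max_card.
have dg0 i : #|T i i| = 0%N by rewrite part cards0.
have H : (#|T o0 o1| = 2 /\ #|T o1 o2| = 2 /\ #|T o2 o0| = 2 /\
           #|T o0 o2| = 1 /\ #|T o2 o1| = 1 /\ #|T o1 o0| = 1)%N \/
          (#|T o0 o1| = 1 /\ #|T o1 o2| = 1 /\ #|T o2 o0| = 1 /\
           #|T o0 o2| = 2 /\ #|T o2 o1| = 2 /\ #|T o1 o0| = 2)%N.
  have := row o0; have := row o1; have := row o2.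
  have := col o0; have := col o1; have := col o2.
  have := bnd o0 o1; have := bnd o0 o2; have := bnd o1 o0.
  have := bnd o1 o2; have := bnd o2 o0; have := bnd o2 o1.
  rewrite !dg0; lia.
suff [r hr hl] : exists2 r : {perm gT * 'I_3}, r \in dig_aut (mcay_arc T) & (r (1, o0)).2 = o1.
  set S := [set @tr gT 3 a | a in [set: gT]].
  have trinj : injective (@tr gT 3).
    move=> a b /(congr1 (fun q : {perm gT * 'I_3} => q (1, o0))).
    by rewrite !trE /= !mul1g => -[].
  have cS : #|S| = 2 by rewrite card_imset // cardsT cT.
  have rS : r \notin S.
    by apply/imsetP => -[a _ ra]; move: hl; rewrite ra trE.
  have sub : r |: S \subset dig_aut (mcay_arc T).
    apply/subsetP => q; rewrite in_setU1 => /orP [/eqP -> // | /imsetP [a _ ->]].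
    exact: tr_aut.
  by have := subset_leq_card sub; rewrite cardsU1 rS cS cardA.
case: H => [[s01 [s12 [s20 [s02 [s21 s10]]]]] | [s01 [s12 [s20 [s02 [s21 s10]]]]]].
  have F01 := full2 cT s01; have F12 := full2 cT s12; have F20 := full2 cT s20.
  have /cards1P [c02 S02] : #|T o0 o2| == 1%N by rewrite s02.
  have /cards1P [c21 S21] : #|T o2 o1| == 1%N by rewrite s21.
  have /cards1P [c10 S10] : #|T o1 o0| == 1%N by rewrite s10.
  pose d (i : 'I_3) := if i == o1 then c21^-1 * c10 else if i == o2 then c02^-1 * c10 else 1.
  have d0 : d o0 = 1 by [].
  have d1 : d o1 = c21^-1 * c10 by [].
  have d2 : d o2 = c02^-1 * c10 by [].
  have HT : forall i j t, (t \in T i j) = (t * (d j * (d i)^-1) \in T (ordS i) (ordS j)).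
    move=> i j t; case: (ord3P i) => ->; case: (ord3P j) => ->;
      rewrite ?ordS0 ?ordS1 ?ordS2 ?part ?F01 ?F12 ?F20 ?S02 ?S21 ?S10; try by rewrite !inE.
    - by apply: single_shift; rewrite d0 d2 invg1 mulg1 mulKVg.
    - by apply: single_shift; rewrite d0 d1 mul1g invMg invgK mulKVg.
    - by apply: single_shift; rewrite d1 d2 invMg invgK !mulgA mulgV mul1g mulgV mul1g.
  exists (rotp d); [exact: rotp_aut comm HT | exact: rotp_layer].
have F02 := full2 cT s02; have F21 := full2 cT s21; have F10 := full2 cT s10.
have /cards1P [c01 S01] : #|T o0 o1| == 1%N by rewrite s01.
have /cards1P [c12 S12] : #|T o1 o2| == 1%N by rewrite s12.
have /cards1P [c20 S20] : #|T o2 o0| == 1%N by rewrite s20.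
pose d (i : 'I_3) := if i == o1 then c01^-1 * c12 else if i == o2 then c01^-1 * c20 else 1.
have d0 : d o0 = 1 by [].
have d1 : d o1 = c01^-1 * c12 by [].
have d2 : d o2 = c01^-1 * c20 by [].
have HT : forall i j t, (t \in T i j) = (t * (d j * (d i)^-1) \in T (ordS i) (ordS j)).
  move=> i j t; case: (ord3P i) => ->; case: (ord3P j) => ->;
    rewrite ?ordS0 ?ordS1 ?ordS2 ?part ?F02 ?F21 ?F10 ?S01 ?S12 ?S20; try by rewrite !inE.
  - by apply: single_shift; rewrite d0 d1 invg1 mulg1 mulKVg.
  - by apply: single_shift; rewrite d1 d2 invMg invgK (comm (c01^-1 * c20)) -!mulgA !mulKVg.
  - by apply: single_shift; rewrite d0 d2 mul1g invMg invgK mulKVg.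
exists (rotp d); [exact: rotp_aut comm HT | exact: rotp_layer].
Qed.

Local Close Scope group_scope.

Theorem lemma3p3 (gT : finGroupType) (m : nat) :
  cyclic [set: gT] -> 2 <= #|[set: gT]| -> 3 <= m ->
  (admits_mPDR gT m 3 <-> ~ (#|[set: gT]| = 2 /\ m = 3)).
Proof.
move=> cyc n2 m3; split.
  by move=> adm [c2 e3]; subst m; exact: (no_pdr cyc c2 adm).
move=> H; have cyc' := cyc; case/cyclicP: cyc' => x gen.
have ox : #[x]%g = #|[set: gT]| by rewrite gen.
have h1 : 1 < #[x]%g by rewrite ox.
have h2 : m = 3 -> 2 < #[x]%g by rewrite ox => e3; lia.
exact: (Tc_admits (esym gen) h1 m3 h2).
Qed.
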